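(* A Tychonoff space $X$ is both a nowhere almost $P$-space and an almost $P$-space if and only if $X$ is discrete.
   Context: $C(X)$ is the ring of real-valued continuous functions on $X$; a zero set is $Z(h)=\{x: h(x)=0\}$ with $h\in C(X)$ and a cozero set is its complement. $T''(X)$ is the set of all functions $f\colon X\to\mathbb{R}$ for which there is a dense cozero set $U$ of $X$ with $f|_U$ continuous. $\chi_A$ is the characteristic function of $A$. $X$ is a nowhere almost $P$-space if $\chi_{\{p\}}\in T''(X)$ for all $p\in X$. $X$ is an almost $P$-space if every non-empty $G_\delta$-set (equivalently, for Tychonoff $X$, every non-empty zero set) has non-empty interior. *)

(* Defs.v *)
From HB Require Import structures.
From mathcomp Require Import all_boot all_order all_algebra.
From mathcomp Require Import all_classical all_reals all_analysis.
Set Implicit Arguments. Unset Strict Implicit. Unset Printing Implicit Defensive.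
Import Order.TTheory GRing.Theory Num.Theory.
Import numFieldNormedType.Exports.
Local Open Scope classical_set_scope.
Local Open Scope ring_scope.

Section Defs.
Context {R : realType} {X : topologicalType}.

Definition tychonoff_space : Prop :=
  hausdorff_space X /\
  forall (x : X) (B : set X), closed B -> ~ B x ->
    exists f : X -> R, [/\ continuous f, f x = 0 & forall y, B y -> f y = 1].

Definition zero_set (h : X -> R) : set X := [set x | h x = 0].

Definition is_zero_set (Z : set X) : Prop :=
  exists h : X -> R, continuous h /\ Z = zero_set h.

Definition is_cozero_set (U : set X) : Prop :=
  exists h : X -> R, continuous h /\ U = ~` zero_set h.

Definition in_T'' (f : X -> R) : Prop :=
  exists U : set X, is_cozero_set U /\ dense U /\ {within U, continuous f}.

Definition nowhere_almost_P_space : Prop :=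
  forall p : X, in_T'' (\1_[set p] : X -> R).

Definition almost_P_space : Prop :=
  forall Z : set X, is_zero_set Z -> Z !=set0 -> Z° !=set0.

Definition discrete_sp : Prop := forall A : set X, open A.

End Defs.

(* Main.v *)
Require Import Defs.
From mathcomp Require Import all_boot all_order all_algebra.
From mathcomp Require Import all_classical all_reals all_analysis.
Import Order.TTheory GRing.Theory Num.Theory.
Import numFieldNormedType.Exports.
Local Open Scope classical_set_scope.
Local Open Scope ring_scope.

Lemma open_nz (R : realType) : open (~` [set x : R | x = 0]).
Proof. by rewrite openC; apply: closed_eq. Qed.

Lemma cozero_open (R : realType) (X : topologicalType) (U : set X) :
  @is_cozero_set R X U -> open U.
Proof.
move=> [h [hc ->]].
have -> : ~` zero_set h = h @^-1` (~` [set x : R | x = 0]) by [].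
apply: open_comp; last exact: open_nz.
by move=> x _; apply: hc.
Qed.

Theorem corollary4p1 (R : realType) (X : topologicalType) :
  @tychonoff_space R X ->
  ((@nowhere_almost_P_space R X /\ @almost_P_space R X) <-> @discrete_sp X).
Proof.
move=> _; split.
- move=> [NAP AP].
  have op1 : forall p : X, open [set p].
    move=> p.
    have [U [cU [dU cf]]] := NAP p.
    have oU := @cozero_open R X U cU.
    have [Up|nUp] := pselect (U p).
      move: cf; rewrite continuous_open_subspace // => cf.
      have Ho := (proj1 (continuous_inP _ oU) cf) _ (@open_nz R).
      suff E : U `&` (\1_[set p] : X -> R) @^-1` (~` [set x : R | x = 0]) = [set p] by rewrite -E.
      apply/seteqP; split => y /=.
        move=> [_]; rewrite indicE; case: (boolP (y \in [set p])).
          by rewrite inE.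
        by move=> _ /=; rewrite mulr0n.
      move=> ->; split => //; rewrite indicE.
      by rewrite mem_set //=; move=> /eqP; rewrite oner_eq0.
    have [h [hc hU]] := cU.
    have Zz : @is_zero_set R X (zero_set h) by exists h.
    have [|x Zx] := AP _ Zz.
      exists p.
      apply: contrapT => hp; apply: nUp; rewrite hU; exact: hp.
    have [V xV VZ] : exists2 V, open_nbhs x V & V `<=` zero_set h.
      by move: Zx; rewrite /interior nbhsE.
    case: xV => oV Vx.
    have [y [Vy Uy]] := dU V (ex_intro _ x Vx) oV.
    by move: Uy; rewrite hU => Uy; case: (Uy (VZ _ Vy)).
  move=> A; rewrite openE => x Ax.
  rewrite /interior; apply: (@filterS _ _ _ [set x]).
    by move=> y ->.
  by apply: open_nbhs_nbhs; split => //; apply: op1.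
- move=> D; split.
  + move=> p; exists setT; split; [|split].
    * exists (cst 1); split; first exact: cst_continuous.
      by apply/seteqP; split => y //= _; rewrite /zero_set /=; apply/eqP; rewrite oner_eq0.
    * by move=> O O0 _; rewrite setIT.
    * apply: continuous_subspaceT; apply/continuousP => A _; exact: D.
  + move=> Z _ [x Zx]; exists x; move: (D Z); rewrite openE; exact.
Qed.
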